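(* Let $D$ be a digraph with $\chi(D)>\omega$. Then both $\vec H_{\omega,\omega}$ and $\overleftarrow{H}_{\omega,\omega}$ embed into $D$ (as not necessarily induced subdigraphs).
   Context: A digraph is a pair $D=(V,E)$ with $E\subseteq V^2$ such that $uv\in E$ implies $vu\notin E$. The dichromatic number $\chi(D)$ is the minimal number of acyclic vertex sets (sets inducing no directed cycle) covering $V(D)$. $\vec H_{\omega,\omega}$ is the digraph on $\omega\times 2$ whose arcs are $(k,0)(\ell,1)$ for all $k\leq\ell<\omega$; $\overleftarrow{H}_{\omega,\omega}$ is the digraph on $\omega\times2$ whose arcs are $(\ell,1)(k,0)$ for all $k\leq\ell<\omega$. *)

(* Defs.v *)
From Stdlib Require Import List.
Import ListNotations.

Definition oriented {V : Type} (E : V -> V -> Prop) : Prop :=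
  forall u v, E u v -> ~ E v u.

Fixpoint path_arcs {V : Type} (E : V -> V -> Prop) (x : V) (l : list V) : Prop :=
  match l with
  | [] => True
  | y :: l' => E x y /\ path_arcs E y l'
  end.

Definition directed_cycle {V : Type} (E : V -> V -> Prop) (l : list V) : Prop :=
  exists v0 rest, l = v0 :: rest /\ rest <> [] /\ NoDup l /\
    path_arcs E v0 (rest ++ [v0]).

Definition acyclic_set {V : Type} (E : V -> V -> Prop) (A : V -> Prop) : Prop :=
  ~ exists l, directed_cycle E l /\ forall v, In v l -> A v.

Definition dichromatic_le_omega {V : Type} (E : V -> V -> Prop) : Prop :=
  exists A : nat -> V -> Prop,
    (forall n, acyclic_set E (A n)) /\ forall v, exists n, A n v.

Definition dichromatic_gt_omega {V : Type} (E : V -> V -> Prop) : Prop :=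
  ~ dichromatic_le_omega E.

(* Vertex set omega x 2, with (k,false) = (k,0) and (k,true) = (k,1). *)
Definition H_fwd (x y : nat * bool) : Prop :=
  snd x = false /\ snd y = true /\ fst x <= fst y.

Definition H_bwd (x y : nat * bool) : Prop :=
  snd x = true /\ snd y = false /\ fst y <= fst x.

Definition embeds {W V : Type} (H : W -> W -> Prop) (E : V -> V -> Prop) : Prop :=
  exists f : W -> V, (forall x y, f x = f y -> x = y) /\
    (forall x y, H x y -> E (f x) (f y)).

(* Main.v *)
Require Import Defs.
From mathcomp Require ssreflect ssrfun ssrbool eqtype ssrnat seq boolp wochoice.

Module WO.
Import ssreflect ssrfun ssrbool eqtype ssrnat seq boolp wochoice.
Lemma wo_exists (T : Type) : exists R : T -> T -> Prop,
  (forall A : T -> Prop, (exists x, A x) -> exists z, A z /\ forall y, A y -> R z y) /\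
  (forall x y, R x y -> R y x -> x = y).
Proof.
have [R Rwo] := well_ordering_principle {classic T}.
exists (fun x y => R x y); split.
- move=> A [x Ax].
  have ne : nonempty [pred y : {classic T} | `[< A y >]].
    by exists x; rewrite inE; apply/asboolP.
  have [z [[zA lb] _]] := Rwo _ ne.
  exists z; split; first by move: zA; rewrite inE => /asboolP.
  by move=> y Ay; apply: lb; rewrite inE; apply/asboolP.
- move=> x y Rxy Ryx.
  have anti := @wo_chain_antisymmetric {classic T} R predT (fun A _ => Rwo A).
  by apply: (anti x y) => //; rewrite Rxy Ryx.
Qed.
End WO.

Set Bullet Behavior "Strict Subproofs".
Unset Asymmetric Patterns.

From Stdlib Require Import List Permutation Arith Lia Classical ClassicalEpsilon ProofIrrelevance FunctionalExtensionality Wellfounded Cantor.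
Import ListNotations.

Lemma lt_exists (T : Type) : exists lt : T -> T -> Prop,
  well_founded lt /\ (forall x y z, lt x y -> lt y z -> lt x z) /\
  (forall x y, lt x y \/ x = y \/ lt y x) /\
  (forall A : T -> Prop, (exists x, A x) -> exists z, A z /\ forall y, A y -> ~ lt y z).
Proof.
  destruct (WO.wo_exists T) as [R [Hmin Hanti]].
  exists (fun x y => R x y /\ x <> y).
  assert (Hrefl : forall x, R x x).
  { intro x. destruct (Hmin (fun z => z = x)) as [z [Hz H]]; [eauto|]. subst; auto. }
  assert (Hmin' : forall A : T -> Prop, (exists x, A x) -> exists z, A z /\ forall y, A y -> ~ (R y z /\ y <> z)).
  { intros A HA. destruct (Hmin A HA) as [z [Hz H]]. exists z; split; auto.
    intros y Ay [Ryz Hne]. apply Hne. apply Hanti; auto. }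
  split; [|split; [|split]]; auto.
  - intro x. apply NNPP; intro Hn.
    destruct (Hmin' (fun v => ~ Acc (fun x y => R x y /\ x <> y) v)) as [z [Hz H]]; [eauto|].
    apply Hz. constructor. intros y Hy. apply NNPP; intro Hy'. exact (H y Hy' Hy).
  - intros x y z [Rxy nxy] [Ryz nyz].
    destruct (Hmin (fun w => w = x \/ w = y \/ w = z)) as [m [Hm H]]; [eauto|].
    destruct Hm as [ -> | [ -> | -> ] ].
    + split; [apply H; auto|]. intro; subst. apply nxy, Hanti; auto.
    + exfalso. apply nxy, Hanti; auto.
    + exfalso. apply nyz, Hanti; auto.
  - intros x y. destruct (classic (x = y)) as [e|ne]; [auto|].
    destruct (Hmin (fun w => w = x \/ w = y)) as [m [Hm H]]; [eauto|].
    destruct Hm as [ -> | -> ]; [left|right;right]; split; auto.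
Qed.

Definition finX {V} (E : V -> V -> Prop) (X : V -> Prop) (F : list V) : Prop :=
  exists L, forall b, X b -> (forall f, In f F -> E f b) -> In b L.

Definition stepH {V} (E : V -> V -> Prop) (X A : V -> Prop) (a0 : V)
  (p : list V * list V) : list V * list V :=
  let (as_, bs) := p in
  let a := epsilon (inhabits a0) (fun a => A a /\ ~ In a (as_ ++ bs)) in
  let b := epsilon (inhabits a0) (fun b => X b /\ (forall f, In f (a :: as_) -> E f b)
                                      /\ ~ In b (a :: as_ ++ bs)) in
  (a :: as_, b :: bs).

Fixpoint stH {V} E X A (a0 : V) (n : nat) : list V * list V :=
  match n with
  | 0 => ([], [])
  | S n => stepH E X A a0 (stH E X A a0 n)
  end.

Lemma H_lemma {V} (E : V -> V -> Prop) (X A : V -> Prop) :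
  (forall L, exists a, A a /\ ~ In a L) ->
  (forall F, (forall f, In f F -> A f) -> forall L,
      exists b, X b /\ (forall f, In f F -> E f b) /\ ~ In b L) ->
  embeds H_fwd E.
Proof.
  intros HA HR.
  destruct (HA []) as [a0 _].
  set (st := stH E X A a0).
  set (aH := fun k => hd a0 (fst (st (S k)))).
  set (bH := fun k => hd a0 (snd (st (S k)))).
  assert (Hstep : forall n, fst (st (S n)) = aH n :: fst (st n) /\ snd (st (S n)) = bH n :: snd (st n)).
  { intro n. unfold aH, bH, st. simpl. destruct (stH E X A a0 n). simpl. auto. }
  assert (Hspec : forall n, (forall f, In f (fst (st n)) -> A f) ->
     (A (aH n) /\ ~ In (aH n) (fst (st n) ++ snd (st n))) /\
     (X (bH n) /\ (forall f, In f (aH n :: fst (st n)) -> E f (bH n)) /\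
        ~ In (bH n) (aH n :: fst (st n) ++ snd (st n)))).
  { intros n HF. unfold aH, bH, st in *. simpl. destruct (stH E X A a0 n) as [as_ bs]. simpl in *.
    set (a := epsilon (inhabits a0) (fun a => A a /\ ~ In a (as_ ++ bs))).
    assert (Ha : A a /\ ~ In a (as_ ++ bs)) by (apply epsilon_spec; apply HA).
    split; auto.
    apply (epsilon_spec (inhabits a0) (fun b => X b /\ (forall f, In f (a :: as_) -> E f b)
                                      /\ ~ In b (a :: as_ ++ bs))).
    apply HR. intros f [ <- | Hf ]; [tauto|auto]. }
  assert (HallA : forall n f, In f (fst (st n)) -> A f).
  { induction n; intros f Hf.
    - simpl in Hf. contradiction.
    - rewrite (proj1 (Hstep n)) in Hf. destruct Hf as [ <- | Hf ].
      + exact (proj1 (proj1 (Hspec n (IHn)))).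
      + auto. }
  assert (Hin : forall k n, k < n -> In (aH k) (fst (st n)) /\ In (bH k) (snd (st n))).
  { intros k n. induction n; intro Hk; [lia|].
    rewrite (proj1 (Hstep n)), (proj2 (Hstep n)).
    destruct (Nat.eq_dec k n) as [ -> | ne ]; [simpl; auto|].
    destruct (IHn ltac:(lia)). simpl; auto. }
  exists (fun p : nat * bool => if snd p then bH (fst p) else aH (fst p)).
  split.
  - intros [k bk] [j bj]; simpl.
    assert (HAk := Hspec k (HallA k)). assert (HAj := Hspec j (HallA j)).
    destruct bk, bj; intro Heq.
    + destruct (lt_eq_lt_dec k j) as [[ lt | -> ]|lt]; auto.
      * exfalso. apply (proj2 (proj2 (proj2 HAj))). right. apply in_or_app. right. rewrite <- Heq. apply Hin; auto.
      * exfalso. apply (proj2 (proj2 (proj2 HAk))). right. apply in_or_app. right. rewrite Heq. apply Hin; auto.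
    + exfalso. destruct (le_lt_dec j k) as [le|lt].
      * apply (proj2 (proj2 (proj2 HAk))). rewrite Heq.
        destruct (Nat.eq_dec j k) as [ -> | ne ]; [left; auto|]. right. apply in_or_app. left. apply Hin; lia.
      * apply (proj2 (proj1 HAj)). apply in_or_app. right. rewrite <- Heq. apply Hin; auto.
    + exfalso. destruct (le_lt_dec k j) as [le|lt].
      * apply (proj2 (proj2 (proj2 HAj))). rewrite <- Heq.
        destruct (Nat.eq_dec j k) as [ -> | ne ]; [left; auto|]. right. apply in_or_app. left. apply Hin; lia.
      * apply (proj2 (proj1 HAk)). apply in_or_app. right. rewrite Heq. apply Hin; auto.
    + destruct (lt_eq_lt_dec k j) as [[ lt | -> ]|lt]; auto.
      * exfalso. apply (proj2 (proj1 HAj)). apply in_or_app. left. rewrite <- Heq. apply Hin; auto.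
      * exfalso. apply (proj2 (proj1 HAk)). apply in_or_app. left. rewrite Heq. apply Hin; auto.
  - intros [k bk] [j bj] [H1 [H2 H3]]. simpl in *. subst.
    apply (proj1 (proj2 (proj2 (Hspec j (HallA j))))).
    destruct (Nat.eq_dec k j) as [ -> | ne ]; [left; auto|]. right. apply Hin; lia.
Qed.

Definition closedX {V} (E : V -> V -> Prop) (X C : V -> Prop) : Prop :=
  forall F, (forall f, In f F -> C f) -> finX E X F ->
    forall b, X b -> (forall f, In f F -> E f b) -> C b.

Lemma star {V} (E : V -> V -> Prop) : ~ embeds H_fwd E ->
  forall X C y, closedX E X C -> X y -> ~ C y ->
  exists L, forall u, C u -> E u y -> In u L.
Proof.
  intros NH X C y HC Xy nCy.
  apply NNPP; intro Hn. apply NH.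
  apply (H_lemma E X (fun u => C u /\ E u y)).
  - intro L. apply NNPP; intro H2. apply Hn. exists L. intros u Cu Eu.
    apply NNPP; intro H3. apply H2. exists u; auto.
  - intros F HF L. apply NNPP; intro H2. apply nCy.
    apply (HC F); auto.
    + intros f Hf; apply HF; auto.
    + exists L. intros b Xb Hb. apply NNPP; intro H3. apply H2. exists b; auto.
    + intros f Hf; apply HF; auto.
Qed.

Fixpoint stage {V} (E : V -> V -> Prop) (X Sd : V -> Prop) (n : nat) : V -> Prop :=
  match n with
  | 0 => Sd
  | S m => fun v => stage E X Sd m v \/
       (X v /\ exists F, (forall f, In f F -> stage E X Sd m f) /\ finX E X F /\
                          forall f, In f F -> E f v)
  end.

Definition cl {V} (E : V -> V -> Prop) (X Sd : V -> Prop) (v : V) : Prop :=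
  exists n, stage E X Sd n v.

Lemma stage_mono {V} E X Sd : forall n m (v : V), n <= m -> stage E X Sd n v -> stage E X Sd m v.
Proof.
  intros n m v Hle. induction Hle; auto. intro H. simpl. left; auto.
Qed.

Lemma stage_sub {V} E (X Sd : V -> Prop) : (forall v, Sd v -> X v) ->
  forall n v, stage E X Sd n v -> X v.
Proof.
  intros HS n. induction n; simpl; auto. intros v [H|[H _]]; auto.
Qed.

Lemma list_stage {V} E X Sd : forall F : list V, (forall f, In f F -> cl E X Sd f) ->
  exists n, forall f, In f F -> stage E X Sd n f.
Proof.
  induction F as [|a F IH]; intro H.
  - exists 0. intros f [].
  - destruct IH as [n Hn]. { intros f Hf; apply H; right; auto. }
    destruct (H a (or_introl eq_refl)) as [m Hm].
    exists (max n m). intros f [<-|Hf].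
    + apply (stage_mono E X Sd m); auto; lia.
    + apply (stage_mono E X Sd n); auto; lia.
Qed.

Lemma cl_closed {V} E (X Sd : V -> Prop) : closedX E X (cl E X Sd).
Proof.
  intros F HF Hfin b Xb Hb.
  destruct (list_stage E X Sd F HF) as [n Hn].
  exists (S n). simpl. right. split; auto. exists F. auto.
Qed.

Lemma cl_sub {V} E (X Sd : V -> Prop) : (forall v, Sd v -> X v) -> forall v, cl E X Sd v -> X v.
Proof. intros HS v [n Hn]. eapply stage_sub; eauto. Qed.

Lemma cl_incl {V} E (X Sd : V -> Prop) : forall v, Sd v -> cl E X Sd v.
Proof. intros v H. exists 0. auto. Qed.

Lemma stage_monoS {V} E (X Sd Sd' : V -> Prop) : (forall v, Sd v -> Sd' v) ->
  forall n v, stage E X Sd n v -> stage E X Sd' n v.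
Proof.
  intros HS n. induction n; simpl; auto.
  intros v [H|[Xv [F [H1 H2]]]]; [left; auto|right; split; auto].
  exists F. split; auto.
Qed.

Lemma cl_mono {V} E (X Sd Sd' : V -> Prop) : (forall v, Sd v -> Sd' v) ->
  forall v, cl E X Sd v -> cl E X Sd' v.
Proof. intros HS v [n Hn]. exists n. eapply stage_monoS; eauto. Qed.

Inductive tr (O : Type) : Type :=
| leaf : O -> tr O
| tnil : nat -> tr O
| tcons : tr O -> tr O -> tr O.
Arguments leaf {O}. Arguments tnil {O}. Arguments tcons {O}.

Fixpoint leaves_in {O} (P : O -> Prop) (t : tr O) : Prop :=
  match t with
  | leaf o => P o
  | tnil _ => True
  | tcons a b => leaves_in P a /\ leaves_in P b
  end.

Fixpoint tsize {O} (t : tr O) : nat :=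
  match t with
  | tcons a b => S (tsize a + tsize b)
  | _ => 0
  end.

Fixpoint lenc {O} (l : list (tr O)) : tr O :=
  match l with
  | [] => tnil 0
  | t :: l => tcons t (lenc l)
  end.

Definition inj_into {V O} (X : V -> Prop) (P : O -> Prop) : Prop :=
  exists g : V -> tr O, (forall x y, X x -> X y -> g x = g y -> x = y) /\
                        (forall x, X x -> leaves_in P (g x)).

Lemma leaves_lenc {O} (P : O -> Prop) : forall l, (forall t, In t l -> leaves_in P t) -> leaves_in P (lenc l).
Proof. induction l; simpl; auto. Qed.

Definition LF {V} (E : V -> V -> Prop) (X : V -> Prop) (F : list V) : list V :=
  epsilon (inhabits []) (fun L => forall b, X b -> (forall f, In f F -> E f b) -> In b L).

Definition Fw {V} E X (Sd : V -> Prop) (n : nat) (y : V) : list V :=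
  epsilon (inhabits []) (fun F => (forall f, In f F -> stage E X Sd n f) /\ finX E X F /\
                                 forall f, In f F -> E f y).

Definition idx {V} E X (F : list V) (y : V) : nat :=
  epsilon (inhabits 0) (fun k => nth_error (LF E X F) k = Some y).

Fixpoint codeN {V O} E X Sd (g : V -> tr O) (n : nat) (y : V) : tr O :=
  match n with
  | 0 => tcons (tnil 0) (g y)
  | S m => if excluded_middle_informative (stage E X Sd m y) then codeN E X Sd g m y
           else tcons (tnil (S (idx E X (Fw E X Sd m y) y)))
                      (lenc (map (codeN E X Sd g m) (Fw E X Sd m y)))
  end.

Lemma codeN_shape {V O} E X Sd (g : V -> tr O) : forall n y, stage E X Sd n y ->
  (Sd y /\ codeN E X Sd g n y = tcons (tnil 0) (g y)) \/
  (exists m, m < n /\ X y /\ (forall f, In f (Fw E X Sd m y) -> stage E X Sd m f) /\ finX E X (Fw E X Sd m y) /\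
             (forall f, In f (Fw E X Sd m y) -> E f y) /\
             codeN E X Sd g n y = tcons (tnil (S (idx E X (Fw E X Sd m y) y)))
                      (lenc (map (codeN E X Sd g m) (Fw E X Sd m y)))).
Proof.
  induction n; intros y Hy.
  - left. simpl in Hy. auto.
  - simpl. destruct (excluded_middle_informative (stage E X Sd n y)) as [h|h].
    + destruct (IHn y h) as [H|[m Hm]]; [left; auto|right; exists m; split; [lia|tauto]].
    + right. exists n. split; [lia|]. simpl in Hy. destruct Hy as [Hy|[Xy Hex]]; [contradiction|].
      assert (Hs := epsilon_spec (inhabits []) (fun F => (forall f, In f F -> stage E X Sd n f) /\ finX E X F /\
                                 forall f, In f F -> E f y) Hex).
      fold (Fw E X Sd n y) in Hs. destruct Hs as [? [? ?]]; repeat split; auto.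
Qed.

Lemma lenc_size {O} : forall (l : list (tr O)) t, In t l -> tsize t < tsize (lenc l).
Proof.
  induction l as [|a l IH]; simpl; intros t H; [contradiction|].
  destruct H as [<-|H]; [lia|]. specialize (IH t H). lia.
Qed.

Lemma idx_spec {V} E X F (y : V) : finX E X F -> X y -> (forall f, In f F -> E f y) ->
  nth_error (LF E X F) (idx E X F y) = Some y.
Proof.
  intros Hfin Xy Hy. unfold idx.
  apply (epsilon_spec (inhabits 0) (fun k => nth_error (LF E X F) k = Some y)).
  apply In_nth_error.
  unfold LF. apply (epsilon_spec (inhabits []) (fun L => forall b, X b -> (forall f, In f F -> E f b) -> In b L)); auto.
Qed.

Lemma codeN_inj {V O} E X Sd (g : V -> tr O) :
  (forall x y, Sd x -> Sd y -> g x = g y -> x = y) ->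
  forall N t, tsize t < N -> forall n m y z, stage E X Sd n y -> stage E X Sd m z ->
    codeN E X Sd g n y = t -> codeN E X Sd g m z = t -> y = z.
Proof.
  intros Hg N. induction N; intros t Ht; [lia|].
  intros n m y z Hy Hz Ey Ez.
  destruct (codeN_shape E X Sd g n y Hy) as [[Sy Cy]|[m1 [_ [Xy [H1 [H2 [H3 Cy]]]]]]];
  destruct (codeN_shape E X Sd g m z Hz) as [[Sz Cz]|[m2 [_ [Xz [H1' [H2' [H3' Cz]]]]]]];
  rewrite Cy in Ey; rewrite Cz in Ez; subst t.
  - injection Ez; auto.
  - discriminate.
  - discriminate.
  - injection Ez as Hidx Hl.
    assert (HF : Fw E X Sd m1 y = Fw E X Sd m2 z).
    { revert Hl H1 H1' Ht. generalize (Fw E X Sd m1 y) (Fw E X Sd m2 z).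
      intros F1. induction F1 as [|a F1 IHF]; intros [|b F2]; simpl; intros Hl Hs1 Hs2 Ht;
        try discriminate; auto.
      injection Hl as Hab Hl.
      f_equal.
      - apply (IHN (codeN E X Sd g m1 a)) with (n := m1) (m := m2); auto. simpl in Ht. lia.
      - apply IHF; auto. simpl in *. lia. }
    rewrite <- HF in H2', H3', Hidx.
    assert (Ey := idx_spec E X _ y H2 Xy H3).
    assert (Ez := idx_spec E X _ z H2' Xz H3').
    first [rewrite Hidx in Ey | rewrite <- Hidx in Ey]. rewrite Ey in Ez. injection Ez; auto.
Qed.

Lemma codeN_leaves {V O} E X Sd (g : V -> tr O) (P : O -> Prop) :
  (forall x, Sd x -> leaves_in P (g x)) ->
  forall n y, stage E X Sd n y -> leaves_in P (codeN E X Sd g n y).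
Proof.
  intros Hg n. induction n as [n IH] using lt_wf_ind. intros y Hy.
  destruct (codeN_shape E X Sd g n y Hy) as [[Sy Cy]|[m1 [Hm [Xy [H1 [H2 [H3 Cy]]]]]]];
    rewrite Cy; simpl; split; auto.
  apply leaves_lenc. intros t Ht. apply in_map_iff in Ht. destruct Ht as [f [<- Hf]].
  apply IH; auto.
Qed.

Definition code {V O} E X Sd (g : V -> tr O) (y : V) : tr O :=
  codeN E X Sd g (epsilon (inhabits 0) (fun n => stage E X Sd n y)) y.

Lemma cl_inj {V O} E (X Sd : V -> Prop) (P : O -> Prop) :
  inj_into Sd P -> inj_into (cl E X Sd) P.
Proof.
  intros [g [Hg Hl]]. exists (code E X Sd g). split.
  - intros x y Hx Hy Heq. unfold code in Heq.
    apply (codeN_inj E X Sd g Hg (S (tsize (code E X Sd g x))) (code E X Sd g x) ltac:(lia)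
             _ _ x y (epsilon_spec (inhabits 0) _ Hx) (epsilon_spec (inhabits 0) _ Hy)); auto.
  - intros x Hx. apply codeN_leaves; auto. apply (epsilon_spec (inhabits 0) _ Hx).
Qed.

Definition colourable {V} (E : V -> V -> Prop) (Y : V -> Prop) : Prop :=
  exists c : V -> nat, forall n, acyclic_set E (fun v => Y v /\ c v = n).

Lemma colourable_sub {V} (E : V -> V -> Prop) (Y Z : V -> Prop) :
  colourable E Y -> (forall v, Z v -> Y v) -> colourable E Z.
Proof.
  intros [c Hc] HZ. exists c. intros n [l [Hl Hin]]. apply (Hc n). exists l. split; auto.
  intros v Hv. destruct (Hin v Hv). split; auto.
Qed.

Lemma cycle_two {V} (E : V -> V -> Prop) l : directed_cycle E l ->
  exists a b, In a l /\ In b l /\ a <> b.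
Proof.
  intros [v0 [rest [-> [Hne [Hnd _]]]]].
  destruct rest as [|r rest]; [congruence|].
  exists v0, r. split; [left; auto|split; [right; left; auto|]].
  intro e; subst. inversion Hnd; subst. apply H1. left; auto.
Qed.

Fixpoint enc {O} (t : tr O) : nat :=
  match t with
  | leaf _ => 0
  | tnil k => to_nat (0, k)
  | tcons a b => to_nat (S (enc a), enc b)
  end.

Lemma enc_inj {O} : forall t1 t2 : tr O, leaves_in (fun _ => False) t1 ->
  leaves_in (fun _ => False) t2 -> enc t1 = enc t2 -> t1 = t2.
Proof.
  induction t1 as [o|k|a IHa b IHb]; intros t2 H1 H2 He; simpl in H1; [contradiction|..];
  destruct t2 as [o'|k'|a' b']; simpl in H2; try contradiction; cbn [enc] in He;
  apply (f_equal of_nat) in He; rewrite !cancel_of_to in He; injection He; intros.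
  - subst; auto.
  - discriminate.
  - discriminate.
  - destruct H1, H2. f_equal; auto.
Qed.

Lemma countable_col {V O} (E : V -> V -> Prop) (Y : V -> Prop) :
  inj_into Y (fun _ : O => False) -> colourable E Y.
Proof.
  intros [g [Hg Hl]]. exists (fun v => enc (g v)). intros n [l [Hl' Hin]].
  destruct (cycle_two E l Hl') as [a [b [Ha [Hb Hab]]]].
  destruct (Hin a Ha) as [Ya Ca]. destruct (Hin b Hb) as [Yb Cb].
  apply Hab. apply Hg; auto. apply enc_inj; auto. congruence.
Qed.

Lemma leaves_mono {O} (P Q : O -> Prop) : (forall o, P o -> Q o) -> forall t, leaves_in P t -> leaves_in Q t.
Proof. intros H t. induction t; simpl; intuition. Qed.

Fixpoint shift {O} (d : O) (t : tr O) : tr O :=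
  match t with
  | leaf o => if excluded_middle_informative (o = d) then tnil 0 else leaf o
  | tnil k => tnil (S k)
  | tcons a b => tcons (shift d a) (shift d b)
  end.

Lemma shift_inj {O} (d : O) : forall t1 t2, shift d t1 = shift d t2 -> t1 = t2.
Proof.
  induction t1 as [o|k|a IHa b IHb]; destruct t2 as [o'|k'|a' b']; simpl;
  repeat match goal with |- context [excluded_middle_informative ?P] => destruct (excluded_middle_informative P) end;
  intro H; try discriminate; try (injection H; intros; subst; auto; fail); try congruence.
  injection H; intros. f_equal; auto.
Qed.

Lemma shift_leaves {O} (P Q : O -> Prop) (d : O) : (forall o, P o -> o <> d -> Q o) ->
  forall t, leaves_in P t -> leaves_in Q (shift d t).
Proof.
  intros H t. induction t as [o|k|a IHa b IHb]; simpl; auto.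
  - destruct (excluded_middle_informative (o = d)); simpl; auto.
  - intuition.
Qed.

Lemma last_default {V} : forall (l : list V) a b, l <> [] -> last l a = last l b.
Proof.
  induction l as [|x l IH]; intros a b H; [congruence|].
  destruct l; simpl; auto. apply IH; discriminate.
Qed.

Lemma path_app {V} (E : V -> V -> Prop) : forall l1 l2 a,
  path_arcs E a (l1 ++ l2) -> path_arcs E (last l1 a) l2.
Proof.
  induction l1 as [|x l1 IH]; intros l2 a H; [exact H|].
  destruct H as [_ H]. specialize (IH l2 x H).
  destruct l1 as [|y l1]; [exact IH|].
  assert (Hd : last (x :: y :: l1) a = last (y :: l1) x).
  { change (last (x :: y :: l1) a) with (last (y :: l1) a). apply last_default; discriminate. }
  rewrite Hd. exact IH.
Qed.

Lemma walk {V} (E : V -> V -> Prop) (Q : V -> Prop) : forall l a,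
  path_arcs E a l -> ~ Q a -> (exists z, In z l /\ Q z) ->
  exists p y, E p y /\ In p (a :: l) /\ In y l /\ ~ Q p /\ Q y.
Proof.
  induction l as [|y l IH]; intros a Hp Ha [z [Hz Qz]]; [destruct Hz|].
  destruct Hp as [Eay Hp].
  destruct (classic (Q y)) as [Qy|Qy].
  - exists a, y. simpl; auto.
  - destruct Hz as [<-|Hz]; [contradiction|].
    destruct (IH y Hp Qy (ex_intro _ z (conj Hz Qz))) as [p [y' [H1 [H2 [H3 H4]]]]].
    exists p, y'. simpl in *. intuition.
Qed.

Lemma cycle_transition {V} (E : V -> V -> Prop) (Q : V -> Prop) l : directed_cycle E l ->
  (exists a, In a l /\ Q a) -> (exists b, In b l /\ ~ Q b) ->
  exists p y, E p y /\ In p l /\ In y l /\ ~ Q p /\ Q y.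
Proof.
  intros [v0 [rest [-> [Hne [Hnd Hp]]]]] [a [Ha Qa]] [b [Hb Qb]].
  destruct (classic (Q v0)) as [Q0|Q0].
  - destruct Hb as [<-|Hb]; [contradiction|].
    destruct (in_split b rest) as [r1 [r2 ->]]; auto.
    rewrite <- app_assoc in Hp. simpl in Hp.
    assert (Hp' : path_arcs E b (r2 ++ [v0])).
    { replace (r1 ++ b :: r2 ++ [v0]) with ((r1 ++ [b]) ++ (r2 ++ [v0])) in Hp
        by (rewrite <- app_assoc; reflexivity).
      apply path_app in Hp. rewrite last_last in Hp. auto. }
    destruct (walk E Q _ _ Hp' Qb) as [p [y [H1 [H2 [H3 [H4 H5]]]]]].
    { exists v0. split; auto. apply in_or_app; right; left; auto. }
    exists p, y. repeat split; auto.
    + destruct H2 as [<-|H2]; [right; apply in_or_app; right; left; auto|].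
      apply in_app_or in H2. destruct H2 as [H2|[<-|[]]]; [|left; auto].
      right. apply in_or_app. right. right. auto.
    + apply in_app_or in H3. destruct H3 as [H3|[<-|[]]]; [|left; auto].
      right. apply in_or_app. right. right. auto.
  - destruct (walk E Q _ _ Hp Q0) as [p [y [H1 [H2 [H3 [H4 H5]]]]]].
    { exists a. split; auto. destruct Ha as [<-|Ha]; [contradiction|]. apply in_or_app; left; auto. }
    exists p, y. repeat split; auto.
    + destruct H2 as [<-|H2]; [left; auto|]. apply in_app_or in H2.
      destruct H2 as [H2|[<-|[]]]; [right; auto|left; auto].
    + apply in_app_or in H3. destruct H3 as [H3|[<-|[]]]; [right; auto|left; auto].
Qed.

Lemma min_exists {O} (lt : O -> O -> Prop) : well_founded lt ->
  forall A : O -> Prop, (exists x, A x) -> exists z, A z /\ forall y, A y -> ~ lt y z.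
Proof.
  intros wf A [x Ax]. apply NNPP; intro Hn. revert Ax. induction (wf x) as [x _ IH].
  intro Ax. apply Hn. exists x. split; auto. intros y Ay Hy. exact (IH y Hy Ay).
Qed.

Lemma in_le_sum : forall (l : list nat) x, In x l -> x <= list_sum l.
Proof. induction l as [|a l IH]; simpl; intros x H; [destruct H|]. destruct H as [<-|H]; [lia|]. specialize (IH x H). lia. Qed.

Lemma max_in_list {V O} (lt : O -> O -> Prop) (f : V -> O) :
  (forall x, ~ lt x x) -> (forall x y z, lt x y -> lt y z -> lt x z) ->
  (forall x y, lt x y \/ x = y \/ lt y x) ->
  forall l, l <> [] -> exists x, In x l /\ forall v, In v l -> ~ lt (f x) (f v).
Proof.
  intros irr trans tot. induction l as [|a l IH]; intro Hne; [congruence|].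
  destruct l as [|b l].
  - exists a. split; [left; auto|]. intros v [<-|[]]. apply irr.
  - destruct (IH ltac:(discriminate)) as [x [Hx Hmax]].
    destruct (tot (f x) (f a)) as [h|[h|h]].
    + exists a. split; [left; auto|]. intros v [<-|Hv]; [apply irr|].
      intro h'. apply (Hmax v Hv). eapply trans; eauto.
    + exists x. split; [right; auto|]. intros v [<-|Hv]; [rewrite h; apply irr|auto].
    + exists x. split; [right; auto|]. intros v [<-|Hv]; [|auto].
      intro h'. apply (irr (f x)). eapply trans; eauto.
Qed.

Lemma chain_bound {V O} (lt : O -> O -> Prop) (M : O -> V -> Prop) (beta : O) :
  (forall x y z, lt x y -> lt y z -> lt x z) ->
  (forall x y, lt x y \/ x = y \/ lt y x) ->
  (forall b b' v, lt b b' -> M b v -> M b' v) ->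
  forall F, F <> [] -> (forall f, In f F -> exists c, lt c beta /\ M c f) ->
  exists c, lt c beta /\ forall f, In f F -> M c f.
Proof.
  intros trans tot mono. induction F as [|a F IH]; intros Hne HF; [congruence|].
  destruct (HF a (or_introl eq_refl)) as [ca [Hca Ma]].
  destruct F as [|b F].
  - exists ca. split; auto. intros f [<-|[]]; auto.
  - destruct IH as [c [Hc Hall]]; [discriminate|intros; apply HF; right; auto|].
    destruct (tot ca c) as [h|[h|h]].
    + exists c. split; auto. intros f [<-|Hf]; eauto.
    + subst. exists c. split; auto. intros f [<-|Hf]; auto.
    + exists ca. split; auto. intros f [<-|Hf]; eauto.
Qed.

Theorem main_ind {V O} (E : V -> V -> Prop) (NH : ~ embeds H_fwd E)
  (lt : O -> O -> Prop) (wf : well_founded lt)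
  (trans : forall x y z, lt x y -> lt y z -> lt x z)
  (tot : forall x y, lt x y \/ x = y \/ lt y x) :
  forall alpha (Y : V -> Prop), inj_into Y (fun o => lt o alpha) -> colourable E Y.
Proof.
  assert (irr : forall x, ~ lt x x).
  { intros x. induction (wf x) as [x _ IH]. intro h. exact (IH x h h). }
  intro alpha. induction (wf alpha) as [alpha _ IH]. intros Y HY.
  destruct (classic (exists o, lt o alpha)) as [Hne|Hemp].
  2:{ apply (countable_col (O := O)). destruct HY as [g [Hg Hl]]. exists g. split; auto.
      intros x Hx. apply (leaves_mono (fun o => lt o alpha)); auto. intros o Ho. apply Hemp. eauto. }
  destruct (classic (exists d, lt d alpha /\ forall o, lt o alpha -> lt o d \/ o = d)) as [[d [Hd Hmax]]|Hlim].
  { apply (IH d Hd). destruct HY as [g [Hg Hl]]. exists (fun v => shift d (g v)). split.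
    - intros x y Hx Hy He. apply Hg; auto. apply (shift_inj d); auto.
    - intros x Hx. apply (shift_leaves (fun o => lt o alpha)); auto.
      intros o Ho Hn. destruct (Hmax o Ho); [auto|contradiction]. }
  assert (Hl : forall m, lt m alpha -> exists b, lt m b /\ lt b alpha).
  { intros m Hm. apply NNPP; intro H. apply Hlim. exists m. split; auto.
    intros o Ho. destruct (tot o m) as [h|[h|h]]; auto. exfalso; apply H; exists o; auto. }
  destruct HY as [g [Hg Hlv]].
  set (Xb := fun b x => Y x /\ leaves_in (fun o => lt o b) (g x)).
  set (M := fun b => cl E Y (Xb b)).
  assert (HMY : forall b v, M b v -> Y v).
  { intros b. apply cl_sub. intros v [h _]; auto. }
  assert (HMcol : forall b, lt b alpha -> colourable E (M b)).
  { intros b Hb. apply (IH b Hb). apply cl_inj. exists g. split.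
    - intros x y [Hx _] [Hy _]. auto.
    - intros x [_ Hx]. auto. }
  assert (HMmono : forall b b' v, lt b b' -> M b v -> M b' v).
  { intros b b' v Hbb'. apply cl_mono. intros x [Yx Hx]. split; auto.
    apply (leaves_mono (fun o => lt o b)); eauto. }
  assert (Hbound : forall t, leaves_in (fun o => lt o alpha) t -> exists b, lt b alpha /\ leaves_in (fun o => lt o b) t).
  { induction t as [o|k|a IHa c IHc]; simpl.
    - intro Ho. destruct (Hl o Ho) as [b [h1 h2]]. eauto.
    - intros _. destruct Hne as [o Ho]. eauto.
    - intros [Ha Hc]. destruct (IHa Ha) as [b1 [Hb1 L1]]. destruct (IHc Hc) as [b2 [Hb2 L2]].
      destruct (tot b1 b2) as [h|[h|h]].
      + exists b2. split; auto. split; auto. apply (leaves_mono (fun o => lt o b1)); eauto.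
      + subst. exists b2. auto.
      + exists b1. split; auto. split; auto. apply (leaves_mono (fun o => lt o b2)); eauto. }
  assert (Hcover : forall x, Y x -> exists b, lt b alpha /\ M b x).
  { intros x Yx. destruct (Hbound (g x) (Hlv x Yx)) as [b [Hb Lb]]. exists b. split; auto.
    apply cl_incl. split; auto. }
  set (pi := fun x => epsilon (inhabits alpha)
        (fun b => lt b alpha /\ M b x /\ forall c, lt c alpha -> M c x -> ~ lt c b)).
  assert (Hpi : forall x, Y x -> lt (pi x) alpha /\ M (pi x) x /\ forall c, lt c alpha -> M c x -> ~ lt c (pi x)).
  { intros x Yx. apply (epsilon_spec (inhabits alpha)
        (fun b => lt b alpha /\ M b x /\ forall c, lt c alpha -> M c x -> ~ lt c b)).
    destruct (min_exists lt wf (fun b => lt b alpha /\ M b x) (Hcover x Yx)) as [z [[h1 h2] h3]].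
    exists z. split; [auto|split; [auto|]]. intros c Hc Mc. apply h3; auto. }
  assert (Hfin : forall x, Y x -> exists L, forall u, Y u -> E u x -> lt (pi u) (pi x) -> In u L).
  { intros x Yx.
    destruct (classic (exists L, forall b, Y b -> In b L)) as [[L HL]|Hinf]; [exists L; auto|].
    set (C := fun v => exists c, lt c (pi x) /\ M c v).
    assert (HC : closedX E Y C).
    { intros F HF Hf b Yb Hb. destruct F as [|f F].
      - exfalso. destruct Hf as [L HL]. apply Hinf. exists L. intros b' Yb'. apply HL; auto.
        intros f' [].
      - destruct (chain_bound lt M (pi x) trans tot HMmono (f :: F) ltac:(discriminate) HF)
          as [c [Hc Hall]].
        exists c. split; auto. apply (cl_closed E Y (Xb c) (f :: F)); auto. }
    assert (HnC : ~ C x).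
    { intros [c [Hc Mc]]. destruct (Hpi x Yx) as [h1 [_ h3]]. apply (h3 c); eauto. }
    destruct (star E NH Y C x HC Yx HnC) as [L HL]. exists L.
    intros u Yu Eu Hu. apply HL; auto. exists (pi u). split; auto. apply (Hpi u Yu). }
  set (d := fun b => epsilon (inhabits (fun _ : V => 0))
        (fun c => forall n, acyclic_set E (fun v => M b v /\ c v = n))).
  assert (Hd : forall b, lt b alpha -> forall n, acyclic_set E (fun v => M b v /\ d b v = n)).
  { intros b Hb. apply (epsilon_spec (inhabits (fun _ : V => 0))
        (fun c => forall n, acyclic_set E (fun v => M b v /\ c v = n))). apply HMcol; auto. }
  set (R := fun u x => lt (pi u) (pi x)).
  assert (wfR : well_founded R) by (unfold R; exact (wf_inverse_image V O lt pi wf)).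
  set (Fd := fun x (rec : forall u, R u x -> nat) =>
        to_nat (d (pi x) x, epsilon (inhabits 0)
          (fun m => forall u (h : R u x), Y u -> E u x -> rec u h <> to_nat (d (pi x) x, m)))).
  set (col := Fix wfR (fun _ => nat) Fd).
  assert (Hext : forall x0 (f1 f2 : forall u, R u x0 -> nat), (forall u p, f1 u p = f2 u p) -> Fd x0 f1 = Fd x0 f2).
  { intros x0 f1 f2 Hf.
    assert (Heq : f1 = f2).
    { apply functional_extensionality_dep. intro u. apply functional_extensionality_dep. intro h. auto. }
    rewrite Heq. reflexivity. }
  assert (Hcol_eq : forall x, col x = Fd x (fun u _ => col u)).
  { intro x. exact (Fix_eq wfR (fun _ => nat) Fd Hext x). }
  assert (Hcol_spec : forall x, Y x -> forall u, Y u -> E u x -> R u x -> col u <> col x).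
  { intros x Yx. rewrite (Hcol_eq x). unfold Fd.
    set (P := fun m => forall u (h : R u x), Y u -> E u x -> col u <> to_nat (d (pi x) x, m)).
    assert (HP : P (epsilon (inhabits 0) P)).
    { apply epsilon_spec. destruct (Hfin x Yx) as [L HL].
      exists (S (list_sum (map col L))). intros u h Yu Eu.
      assert (H1 := in_le_sum (map col L) (col u) (in_map col L u (HL u Yu Eu h))).
      assert (H2 := to_nat_non_decreasing (d (pi x) x) (S (list_sum (map col L)))). lia. }
    intros u Yu Eu h. apply (HP u h Yu Eu). }
  assert (Hcol_d : forall x y, col x = col y -> d (pi x) x = d (pi y) y).
  { intros x y H. rewrite (Hcol_eq x), (Hcol_eq y) in H. unfold Fd in H.
    apply (f_equal of_nat) in H. rewrite !cancel_of_to in H. injection H; auto. }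
  exists col. intros n [l [Hcyc Hin]].
  destruct (cycle_two E l Hcyc) as [a0 [_ [Ha0 _]]].
  destruct (max_in_list lt pi irr trans tot l ltac:(destruct l; [destruct Ha0|discriminate]))
    as [x [Hx Hxmax]].
  destruct (Hin x Hx) as [Yx Cx].
  destruct (classic (exists b, In b l /\ ~ (pi b = pi x))) as [Hex|Hall].
  - destruct (cycle_transition E (fun v => pi v = pi x) l Hcyc (ex_intro _ x (conj Hx eq_refl)) Hex)
      as [p [y [Epy [Hp [Hy [Qp Qy]]]]]].
    destruct (Hin p Hp) as [Yp Cp]. destruct (Hin y Hy) as [Yy Cy].
    apply (Hcol_spec y Yy p Yp Epy).
    + unfold R. destruct (tot (pi p) (pi y)) as [h|[h|h]]; auto.
      * exfalso. apply Qp. congruence.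
      * exfalso. apply (Hxmax p Hp). rewrite <- Qy. auto.
    + congruence.
  - apply (Hd (pi x) (proj1 (Hpi x Yx)) (d (pi x) x)). exists l. split; auto.
    intros v Hv. destruct (Hin v Hv) as [Yv Cv].
    assert (Qv : pi v = pi x) by (apply NNPP; intro Hn; apply Hall; eauto).
    split.
    + rewrite <- Qv. apply (Hpi v Yv).
    + transitivity (d (pi v) v); [rewrite Qv; reflexivity | apply Hcol_d; congruence].
Qed.

Definition ltO {V} (ltV : V -> V -> Prop) (a b : option V) : Prop :=
  match a, b with
  | Some x, Some y => ltV x y
  | Some _, None => True
  | _, _ => False
  end.

Lemma main_fwd {V} (E : V -> V -> Prop) : ~ embeds H_fwd E -> dichromatic_le_omega E.
Proof.
  intro NH.
  destruct (lt_exists V) as [ltV [wfV [trV [totV _]]]].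
  assert (wfO : well_founded (ltO ltV)).
  { assert (HS : forall x, Acc (ltO ltV) (Some x)).
    { intro x. induction (wfV x) as [x _ IH]. constructor. intros [y|] h; simpl in h; [auto|contradiction]. }
    intros [x|]; auto. constructor. intros [y|] h; simpl in h; [auto|contradiction]. }
  assert (trO : forall x y z, ltO ltV x y -> ltO ltV y z -> ltO ltV x z).
  { intros [x|] [y|] [z|]; simpl; eauto; intros; contradiction. }
  assert (totO : forall x y, ltO ltV x y \/ x = y \/ ltO ltV y x).
  { intros [x|] [y|]; simpl; auto. destruct (totV x y) as [h|[h|h]]; subst; auto. }
  assert (Hc : colourable E (fun _ => True)).
  { apply (main_ind E NH (ltO ltV) wfO trO totO None).
    exists (fun v => leaf (Some v)). split.
    - intros x y _ _ h. injection h; auto.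
    - intros x _. simpl. auto. }
  destruct Hc as [c Hc]. exists (fun n v => c v = n). split.
  - intros n [l [Hl Hin]]. apply (Hc n). exists l. split; auto.
  - intro v. exists (c v). reflexivity.
Qed.

Lemma path_snoc {V} (E : V -> V -> Prop) : forall L c a,
  path_arcs E c L -> E (last L c) a -> path_arcs E c (L ++ [a]).
Proof.
  induction L as [|x L IH]; intros c a H1 H2.
  - simpl in *. split; auto.
  - destruct H1 as [H1 H1']. split; auto. apply IH; auto.
    destruct L as [|y L]; [exact H2|].
    assert (Hd : last (x :: y :: L) c = last (y :: L) x).
    { change (last (x :: y :: L) c) with (last (y :: L) c). apply last_default; discriminate. }
    rewrite <- Hd. exact H2.
Qed.

Lemma rev_path {V} (E : V -> V -> Prop) : forall l a b,
  path_arcs E a (l ++ [b]) -> path_arcs (fun x y => E y x) b (rev l ++ [a]).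
Proof.
  induction l as [|x l IH]; simpl; intros a b H.
  - destruct H as [H _]. split; auto.
  - destruct H as [H1 H2]. specialize (IH x b H2).
    apply path_snoc; auto. rewrite last_last. auto.
Qed.

Lemma acyc_flip {V} (E : V -> V -> Prop) (A : V -> Prop) :
  acyclic_set (fun x y => E y x) A -> acyclic_set E A.
Proof.
  intros HA [l [[v0 [rest [-> [Hne [Hnd Hp]]]]] Hin]]. apply HA.
  exists (v0 :: rev rest). split.
  - exists v0, (rev rest). split; auto. split.
    + intro h. apply Hne. rewrite <- (rev_involutive rest), h. reflexivity.
    + split.
      * apply (Permutation_NoDup (l := v0 :: rest)); auto.
        apply perm_skip. apply Permutation_rev.
      * apply rev_path; auto.
  - intros v [<-|Hv]; apply Hin; [left; auto|right; apply in_rev; auto].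
Qed.

Theorem proposition3p4 (V : Type) (E : V -> V -> Prop) :
  oriented E -> dichromatic_gt_omega E ->
  embeds H_fwd E /\ embeds H_bwd E.
Proof.
  intros _ Hgt. split.
  - apply NNPP; intro NH. apply Hgt. apply main_fwd; auto.
  - apply NNPP; intro NH. apply Hgt.
    assert (NH' : ~ embeds H_fwd (fun x y => E y x)).
    { intros [f [Hf Ha]]. apply NH. exists f. split; auto.
      intros x y [h1 [h2 h3]]. apply (Ha y x). unfold H_fwd. auto. }
    destruct (main_fwd _ NH') as [A [HA Hcov]]. exists A. split; auto.
    intro n. apply acyc_flip. auto.
Qed.
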